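(* Let $(G_n)$ be a sequence of directed graphs, $G_n$ on vertex set $\{D\}\cup[n]$, in which every participant is reachable from $D$, and let $b_n$ be the maximum out-degree of $G_n$. If $b_n=O((\log n)^{1/2-\epsilon})$ for some $\epsilon>0$, then $\Gamma_{\text{sota}}(G_n)/n\to\infty$ as $n\to\infty$.
   Context: For a directed graph $G$ on $\{D\}\cup[n]$ with dealer $D$ and integer $k\ge 2$, let $\mathcal N(D)$ be the set of out-neighbours of $D$. For a participant $i$ and integer $w\ge k$, let $\ell_w(D\to i)$ be the minimum, over all families of $w$ internally vertex-disjoint directed paths from $D$ to $i$, of the average length (number of edges) of the paths in the family, with $\ell_w(D\to i)=\infty$ if no such family exists. The communication complexity of the state-of-the-art (separate secure transmissions) scheme is $$\Gamma_{\text{sota}}(G)=|\mathcal N(D)|+\sum_{i\notin\mathcal N(D)}\min_{w\ge k}\Big[\frac{w}{w-k+1}\,\ell_w(D\to i)\Big].$$ *)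

(* Defs.v *)
From Stdlib Require Import Reals List Arith Lia ClassicalEpsilon.
Import ListNotations.
Open Scope R_scope.

(* A directed graph on the vertex set {0,1,...,n}: vertex 0 is the dealer D,
   vertices 1..n are the participants [n].  Only the restriction of the
   relation to {0..n} is ever used (walks are required to stay in {0..n}). *)
Definition digraph := nat -> nat -> bool.

(* Extended nonnegative values: [None] stands for +infinity. *)
Definition ext := option R.

Definition ext_le (x y : ext) : Prop :=
  match x, y with
  | _, None => True
  | None, Some _ => False
  | Some a, Some b => a <= b
  end.

Definition ext_add (x y : ext) : ext :=
  match x, y with
  | Some a, Some b => Some (a + b)
  | _, _ => None
  end.

Definition ext_scale (c : R) (x : ext) : ext :=
  match x with
  | Some a => Some (c * a)
  | None => None
  end.

(* The minimum of a set of extended reals (chosen by Hilbert's epsilon;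
   it is the genuine minimum whenever one exists). *)
Definition ext_min (P : ext -> Prop) : ext :=
  epsilon (inhabits None) (fun x => P x /\ forall y, P y -> ext_le x y).

Fixpoint is_walk (G : digraph) (n : nat) (p : list nat) : Prop :=
  match p with
  | [] => True
  | [v] => (v <= n)%nat
  | u :: ((v :: _) as q) => (u <= n)%nat /\ G u v = true /\ is_walk G n q
  end.

Definition is_path (G : digraph) (n s t : nat) (p : list nat) : Prop :=
  NoDup p /\ is_walk G n p /\ (exists q, p = s :: q) /\ last p s = t.

Definition path_len (p : list nat) : nat := (length p - 1)%nat.

Definition internal (p : list nat) : list nat := removelast (tl p).

Definition disjoint_family (G : digraph) (n i : nat) (F : list (list nat)) : Prop :=
  NoDup F /\ Forall (is_path G n 0 i) F /\
  forall j j', (j < length F)%nat -> (j' < length F)%nat -> j <> j' ->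
    forall v, In v (internal (nth j F [])) -> ~ In v (internal (nth j' F [])).

Definition avg_len (F : list (list nat)) : R :=
  INR (list_sum (map path_len F)) / INR (length F).

(* ell_w(D -> i): minimal average length over families of w internally
   vertex-disjoint D->i paths; +infinity (None) if no such family exists. *)
Definition ell (G : digraph) (n w i : nat) : ext :=
  ext_min (fun x => x = None \/
    exists F, disjoint_family G n i F /\ length F = w /\ x = Some (avg_len F)).

Definition sota_term (k : nat) (G : digraph) (n i : nat) : ext :=
  ext_min (fun x => exists w, (k <= w)%nat /\
    x = ext_scale (INR w / INR (w - k + 1)) (ell G n w i)).

Definition outnbrs (G : digraph) (n : nat) : list nat :=
  filter (fun u => G 0%nat u) (seq 1 n).

Definition Gamma_sota (k : nat) (G : digraph) (n : nat) : ext :=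
  ext_add (Some (INR (length (outnbrs G n))))
    (fold_right (fun i acc => ext_add (sota_term k G n i) acc) (Some 0)
       (filter (fun i => negb (G 0%nat i)) (seq 1 n))).

(* out-degree of v in G (loops not counted) and maximum out-degree *)
Definition outdeg (G : digraph) (n v : nat) : nat :=
  length (filter (fun u => andb (negb (Nat.eqb u v)) (G v u)) (seq 0 (S n))).

Definition maxdeg (G : digraph) (n : nat) : nat :=
  fold_right Nat.max 0%nat (map (outdeg G n) (seq 0 (S n))).

Definition all_reachable (G : digraph) (n : nat) : Prop :=
  forall i, (1 <= i <= n)%nat -> exists p, is_path G n 0 i p.

(* Main.v *)
Require Import Defs.
From Stdlib Require Import Reals List Arith Lia Lra ZArith Classical ClassicalEpsilon.
Import ListNotations.
Open Scope R_scope.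

Lemma ext_min_spec (P : ext -> Prop) :
  (exists x, P x /\ forall y, P y -> ext_le x y) -> P (ext_min P).
Proof.
  intros H. unfold ext_min.
  destruct (epsilon_spec (inhabits None) (fun x => P x /\ forall y, P y -> ext_le x y) H) as [H1 _].
  exact H1.
Qed.

Lemma ext_le_refl x : ext_le x x.
Proof. destruct x; simpl; auto; lra. Qed.

Lemma ext_le_trans x y z : ext_le x y -> ext_le y z -> ext_le x z.
Proof. destruct x as [a|], y as [b|], z as [c|]; simpl; intros H1 H2; try tauto; lra. Qed.

Lemma ext_le_total x y : ext_le x y \/ ext_le y x.
Proof.
  destruct x as [a|], y as [b|]; simpl; auto.
  destruct (Rle_dec a b); [left|right]; lra.
Qed.

Lemma fin_min (f : nat -> ext) (m : nat) :
  exists j, (j <= m)%nat /\ forall j', (j' <= m)%nat -> ext_le (f j) (f j').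
Proof.
  induction m.
  - exists 0%nat. split; [lia|]. intros j' Hj. assert (j' = 0%nat) by lia. subst. apply ext_le_refl.
  - destruct IHm as [j [Hj Hmin]].
    destruct (ext_le_total (f j) (f (S m))) as [H|H].
    + exists j. split; [lia|]. intros j' Hj'.
      destruct (Nat.eq_dec j' (S m)) as [->|Hne]; [exact H|]. apply Hmin; lia.
    + exists (S m). split; [lia|]. intros j' Hj'.
      destruct (Nat.eq_dec j' (S m)) as [->|Hne]; [apply ext_le_refl|].
      eapply ext_le_trans; [exact H|]. apply Hmin; lia.
Qed.

Lemma nat_min (P : nat -> Prop) :
  (exists s, P s) -> exists s, P s /\ forall t, P t -> (s <= t)%nat.
Proof.
  intros [s Hs]. apply NNPP. intro Hno.
  assert (Hall : forall s, ~ P s).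
  { intro s0. induction s0 as [s0 IH] using (well_founded_induction lt_wf).
    intro Hp. apply Hno. exists s0. split; auto. intros t Ht.
    destruct (le_lt_dec s0 t) as [l|l]; auto. exfalso. exact (IH t l Ht). }
  exact (Hall s Hs).
Qed.

Definition nbrs (g : digraph) (n v : nat) : list nat :=
  filter (fun u => andb (negb (Nat.eqb u v)) (g v u)) (seq 0 (S n)).

Fixpoint Rset (g : digraph) (n d : nat) : list nat :=
  match d with
  | O => [0%nat]
  | S d' => Rset g n d' ++ flat_map (nbrs g n) (Rset g n d')
  end.

Lemma In_fold_max x l : In x l -> (x <= fold_right Nat.max 0 l)%nat.
Proof.
  induction l; simpl; intros H; [contradiction|].
  destruct H as [->|H]; [lia|]. specialize (IHl H); lia.
Qed.

Lemma outdeg_le g n v : (v <= n)%nat -> (outdeg g n v <= maxdeg g n)%nat.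
Proof. intros Hv. unfold maxdeg. apply In_fold_max. apply in_map. apply in_seq. lia. Qed.

Lemma Rset_bound g n d : forall x, In x (Rset g n d) -> (x <= n)%nat.
Proof.
  induction d; simpl; intros x H.
  - destruct H as [<-|[]]; lia.
  - apply in_app_or in H. destruct H as [H|H]; auto.
    apply in_flat_map in H. destruct H as [v [_ Hx]]. unfold nbrs in Hx.
    apply filter_In in Hx. destruct Hx as [Hx _]. apply in_seq in Hx. lia.
Qed.

Lemma flat_map_len_le (f : nat -> list nat) l b :
  (forall x, In x l -> (length (f x) <= b)%nat) -> (length (flat_map f l) <= length l * b)%nat.
Proof.
  induction l; simpl; intros H; [lia|]. rewrite length_app.
  pose proof (H a (or_introl eq_refl)) as Ha.
  assert (length (flat_map f l) <= length l * b)%nat by (apply IHl; auto). lia.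
Qed.

Lemma Rset_len g n d : (length (Rset g n d) <= (1 + maxdeg g n) ^ d)%nat.
Proof.
  induction d; [simpl; lia|].
  change (Rset g n (S d)) with (Rset g n d ++ flat_map (nbrs g n) (Rset g n d)).
  rewrite length_app, Nat.pow_succ_r'.
  assert (length (flat_map (nbrs g n) (Rset g n d)) <= length (Rset g n d) * maxdeg g n)%nat.
  { apply flat_map_len_le. intros x Hx. apply (outdeg_le g n x). eapply Rset_bound; eauto. }
  assert (length (Rset g n d) * (1 + maxdeg g n) <= (1 + maxdeg g n) ^ d * (1 + maxdeg g n))%nat
    by (apply Nat.mul_le_mono_r; auto).
  lia.
Qed.

Lemma Rset_mono g n d d' x : (d <= d')%nat -> In x (Rset g n d) -> In x (Rset g n d').
Proof. intros H. induction H; intros Hx; auto. simpl. apply in_or_app. left. auto. Qed.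

Lemma walk_head g n v q : is_walk g n (v :: q) -> (v <= n)%nat.
Proof. destruct q; simpl; tauto. Qed.

Lemma last_cons_irr (l : list nat) a b : l <> [] -> last l a = last l b.
Proof.
  induction l as [|c l IH]; [congruence|]. intros _.
  destruct l as [|e l]; simpl; auto. apply IH; discriminate.
Qed.

Lemma walk_in_R g n : forall q u d, is_walk g n (u :: q) -> NoDup (u :: q) -> In u (Rset g n d) ->
  In (last (u :: q) u) (Rset g n (d + length q)).
Proof.
  induction q as [|v q IH]; intros u d Hw Hnd Hu.
  - simpl. rewrite Nat.add_0_r. exact Hu.
  - simpl in Hw. destruct Hw as [Hun [Hg Hw]].
    inversion Hnd as [|? ? Hnin Hnd']; subst.
    assert (Hv : In v (Rset g n (S d))).
    { simpl. apply in_or_app. right. apply in_flat_map. exists u. split; auto.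
      unfold nbrs. apply filter_In. split.
      - apply in_seq. pose proof (walk_head g n v q Hw). lia.
      - rewrite Hg. assert (Hvu : v <> u) by (intro; subst; apply Hnin; left; auto).
        apply Nat.eqb_neq in Hvu. rewrite Hvu. reflexivity. }
    specialize (IH v (S d) Hw Hnd' Hv).
    replace (d + length (v :: q))%nat with (S d + length q)%nat by (simpl; lia).
    assert (E : last (u :: v :: q) u = last (v :: q) v).
    { change (last (v :: q) u = last (v :: q) v). apply last_cons_irr; discriminate. }
    rewrite E. exact IH.
Qed.

Lemma path_R g n i p : is_path g n 0 i p -> In i (Rset g n (path_len p)).
Proof.
  intros [Hnd [Hw [[q ->] Hl]]]. rewrite <- Hl.
  pose proof (walk_in_R g n q 0%nat 0%nat Hw Hnd (or_introl eq_refl)) as H.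
  replace (path_len (0%nat :: q)) with (0 + length q)%nat by (unfold path_len; simpl; lia).
  exact H.
Qed.

Lemma path_first g n i p : is_path g n 0 i p -> i <> 0%nat -> g 0%nat i = false ->
  In (nth 1 p 0%nat) (internal p) /\ (nth 1 p 0%nat <= n)%nat.
Proof.
  intros [Hnd [Hw [[q ->] Hl]]] Hi Hg.
  destruct q as [|v [|r s]].
  - simpl in Hl. congruence.
  - simpl in Hl. subst v. simpl in Hw. destruct Hw as [_ [Hg' _]]. congruence.
  - simpl in Hw. destruct Hw as [_ [_ Hw]]. split.
    + simpl. left. reflexivity.
    + simpl. apply (walk_head g n v (r::s)). exact Hw.
Qed.

Lemma family_len g n i F : disjoint_family g n i F -> i <> 0%nat -> g 0%nat i = false ->
  (length F <= S n)%nat.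
Proof.
  intros [HndF [Hall Hdisj]] Hi Hg.
  rewrite Forall_forall in Hall.
  set (h := fun p : list nat => nth 1 p 0%nat).
  assert (Hnd : NoDup (map h F)).
  { apply (NoDup_nth (map h F) 0%nat). intros j j' Hj Hj' Heq.
    rewrite length_map in Hj, Hj'.
    destruct (Nat.eq_dec j j') as [|Hne]; auto. exfalso.
    assert (E1 : nth j (map h F) 0%nat = h (nth j F [])) by exact (map_nth h F [] j).
    assert (E2 : nth j' (map h F) 0%nat = h (nth j' F [])) by exact (map_nth h F [] j').
    rewrite E1, E2 in Heq.
    destruct (path_first _ _ _ _ (Hall _ (nth_In F [] Hj)) Hi Hg) as [Hin _].
    destruct (path_first _ _ _ _ (Hall _ (nth_In F [] Hj')) Hi Hg) as [Hin' _].
    unfold h in Heq. rewrite Heq in Hin.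
    exact (Hdisj j j' Hj Hj' Hne _ Hin Hin'). }
  assert (Hincl : incl (map h F) (seq 0 (S n))).
  { intros x Hx. apply in_map_iff in Hx. destruct Hx as [p [<- Hp]].
    destruct (path_first _ _ _ _ (Hall p Hp) Hi Hg) as [_ Hle].
    apply in_seq. unfold h. lia. }
  pose proof (NoDup_incl_length Hnd Hincl) as H. rewrite length_map, length_seq in H. exact H.
Qed.

Definition Pell g n w i : ext -> Prop := fun x => x = None \/
    exists F, disjoint_family g n i F /\ length F = w /\ x = Some (avg_len F).

Lemma ell_in g n w i : (0 < w)%nat -> Pell g n w i (ell g n w i).
Proof.
  intros Hw. unfold ell. change (Pell g n w i (ext_min (Pell g n w i))).
  apply ext_min_spec.
  destruct (classic (exists F, disjoint_family g n i F /\ length F = w)) as [Hex|Hno].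
  - set (Sset := fun s => exists F, disjoint_family g n i F /\ length F = w /\
                                    list_sum (map path_len F) = s).
    destruct (nat_min Sset) as [s [[F [HF [HFl Hs]]] Hmin]].
    { destruct Hex as [F [HF HFl]]. exists (list_sum (map path_len F)), F. auto. }
    exists (Some (avg_len F)). split. { right. exists F. auto. }
    intros y [->|[F' [HF' [HF'l ->]]]]; simpl; auto.
    unfold avg_len, Rdiv. rewrite HFl, HF'l. apply Rmult_le_compat_r.
    + left; apply Rinv_0_lt_compat, lt_0_INR; lia.
    + apply le_INR. rewrite Hs. apply Hmin. exists F'. auto.
  - exists None. split; [left; auto|].
    intros y [->|[F' [HF' [HF'l ->]]]]; [simpl; auto| exfalso; apply Hno; eauto].
Qed.

Lemma ell_lb g n w i L : (0 < w)%nat -> (forall p, is_path g n 0 i p -> (L <= path_len p)%nat) ->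
  ext_le (Some (INR L)) (ell g n w i).
Proof.
  intros Hw HL. pose proof (ell_in g n w i Hw) as H. unfold Pell in H.
  destruct H as [->|[F [[_ [Hall _]] [HFl ->]]]]; simpl; auto.
  unfold avg_len. rewrite HFl.
  assert (Hs : (w * L <= list_sum (map path_len F))%nat).
  { rewrite <- HFl. clear HFl. revert Hall. induction F as [|p F IH]; intros Hall; simpl; [lia|].
    inversion Hall; subst. specialize (HL p H1). specialize (IH H2). lia. }
  apply le_INR in Hs. rewrite mult_INR in Hs.
  assert (Hw' : 0 < INR w) by (apply lt_0_INR; lia).
  unfold Rdiv. apply (Rmult_le_reg_r (INR w)); auto.
  rewrite Rmult_assoc, (Rinv_l (INR w) (Rgt_not_eq _ _ Hw')). lra.
Qed.

Lemma scale_lb c L e : 1 <= c -> 0 <= L -> ext_le (Some L) e -> ext_le (Some L) (ext_scale c e).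
Proof. destruct e as [a|]; simpl; auto. intros. nra. Qed.

Lemma ratio_ge1 w k : (k <= w)%nat -> (1 <= k)%nat -> 1 <= INR w / INR (w - k + 1).
Proof.
  intros H1 H2.
  assert (Hm : 0 < INR (w - k + 1)) by (apply lt_0_INR; lia).
  assert (Hle : INR (w - k + 1) <= INR w) by (apply le_INR; lia).
  unfold Rdiv. apply (Rmult_le_reg_r (INR (w - k + 1))); auto.
  rewrite Rmult_assoc, (Rinv_l _ (Rgt_not_eq _ _ Hm)). lra.
Qed.

Lemma sota_lb k g n i L : (1 <= k)%nat -> i <> 0%nat -> g 0%nat i = false ->
  (forall p, is_path g n 0 i p -> (L <= path_len p)%nat) ->
  ext_le (Some (INR L)) (sota_term k g n i).
Proof.
  intros Hk Hi Hg HL.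
  set (gf := fun w => ext_scale (INR w / INR (w - k + 1)) (ell g n w i)).
  set (P := fun x => exists w, (k <= w)%nat /\ x = gf w).
  assert (Hnone : forall w, (S n < w)%nat -> gf w = None).
  { intros w Hw. unfold gf. pose proof (ell_in g n w i ltac:(lia)) as H. unfold Pell in H.
    destruct H as [->|[F [HF [HFl _]]]]; [reflexivity|].
    pose proof (family_len g n i F HF Hi Hg). lia. }
  assert (HP : P (sota_term k g n i)).
  { unfold sota_term. change (P (ext_min P)). apply ext_min_spec.
    destruct (fin_min (fun j => gf (k + j)%nat) (S n)) as [j [Hj Hmin]].
    exists (gf (k + j)%nat). split. { exists (k + j)%nat. split; [lia|reflexivity]. }
    intros y [w [Hw ->]].
    destruct (le_lt_dec (w - k) (S n)) as [Hl|Hl].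
    - specialize (Hmin (w - k)%nat Hl). simpl in Hmin.
      replace (k + (w - k))%nat with w in Hmin by lia. exact Hmin.
    - rewrite (Hnone w) by lia. destruct (gf (k + j)%nat); simpl; auto. }
  destruct HP as [w [Hw ->]]. unfold gf. apply scale_lb.
  - apply ratio_ge1; lia.
  - apply pos_INR.
  - apply ell_lb; auto; lia.
Qed.

Lemma fold_lb (t : nat -> ext) (a : nat -> R) l :
  (forall i, In i l -> ext_le (Some (a i)) (t i)) ->
  ext_le (Some (fold_right (fun i s => a i + s) 0 l))
         (fold_right (fun i acc => ext_add (t i) acc) (Some 0) l).
Proof.
  induction l as [|x l IH]; simpl; intros H; [lra|].
  pose proof (H x (or_introl eq_refl)) as Hx.
  assert (IH' := IH (fun i Hi => H i (or_intror Hi))).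
  set (r := fold_right (fun i acc => ext_add (t i) acc) (Some 0) l) in *.
  destruct (t x) as [u|]; destruct r as [v|]; simpl in *; auto; lra.
Qed.

Definition inR (Rs : list nat) (i : nat) : bool := if in_dec Nat.eq_dec i Rs then true else false.
Definition aw (Rs : list nat) (x : R) (i : nat) : R := if inR Rs i then 0 else x.

Lemma sum_count Rs x l :
  fold_right (fun i s => aw Rs x i + s) 0 l =
  x * INR (length (filter (fun i => negb (inR Rs i)) l)).
Proof.
  induction l as [|j l IH]; simpl; [ring|].
  unfold aw at 1. destruct (inR Rs j); simpl negb; cbv iota; rewrite IH; [ring|].
  change (length (j :: filter (fun i => negb (inR Rs i)) l)) with (S (length (filter (fun i => negb (inR Rs i)) l))).
  rewrite S_INR; ring.
Qed.

Lemma filter_split (f : nat -> bool) l :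
  (length (filter f l) + length (filter (fun x => negb (f x)) l))%nat = length l.
Proof. induction l as [|a l IH]; simpl; auto. destruct (f a); simpl; lia. Qed.

Lemma comb k g n d : (2 <= k)%nat -> (1 <= d)%nat ->
  exists c A, (n <= c + 2 * A)%nat /\ (A <= (1 + maxdeg g n)^d)%nat /\
   ext_le (Some (INR (S d) * INR c)) (Gamma_sota k g n).
Proof.
  intros Hk Hd.
  set (Rs := Rset g n d).
  set (l := filter (fun i => negb (g 0%nat i)) (seq 1 n)).
  exists (length (filter (fun i => negb (inR Rs i)) l)), (length Rs).
  split; [|split; [apply Rset_len|]].
  - pose proof (filter_split (inR Rs) l) as H1.
    assert (H2 : (length (outnbrs g n) + length l = n)%nat).
    { pose proof (filter_split (fun u => g 0%nat u) (seq 1 n)) as H2.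
      rewrite length_seq in H2. exact H2. }
    assert (H3 : (length (filter (inR Rs) l) <= length Rs)%nat).
    { apply NoDup_incl_length. apply NoDup_filter. unfold l. apply NoDup_filter, seq_NoDup.
      intros x Hx. apply filter_In in Hx. destruct Hx as [_ Hx]. unfold inR in Hx.
      destruct (in_dec Nat.eq_dec x Rs); [auto|discriminate]. }
    assert (H4 : (length (outnbrs g n) <= length Rs)%nat).
    { apply NoDup_incl_length. unfold outnbrs. apply NoDup_filter, seq_NoDup.
      intros x Hx. unfold outnbrs in Hx. apply filter_In in Hx. destruct Hx as [Hx Hg].
      apply in_seq in Hx.
      unfold Rs. apply (Rset_mono g n 1 d); [lia|]. simpl. right. rewrite app_nil_r.
      unfold nbrs. apply filter_In. split. { apply in_seq; lia. }
      rewrite Hg. destruct (Nat.eqb_spec x 0); [lia|reflexivity]. }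
    lia.
  - assert (Hf : ext_le (Some (fold_right (fun i s => aw Rs (INR (S d)) i + s) 0 l))
                   (fold_right (fun i acc => ext_add (sota_term k g n i) acc) (Some 0) l)).
    { apply fold_lb. intros i Hi. unfold l in Hi. apply filter_In in Hi. destruct Hi as [Hi Hg].
      apply in_seq in Hi. destruct (g 0%nat i) eqn:Eg; [discriminate|].
      unfold aw. destruct (inR Rs i) eqn:E.
      - exact (sota_lb k g n i 0 ltac:(lia) ltac:(lia) Eg ltac:(intros; lia)).
      - apply sota_lb; auto; try lia.
        intros p Hp. destruct (le_lt_dec (S d) (path_len p)) as [Hl|Hl]; auto. exfalso.
        pose proof (path_R g n i p Hp) as HR.
        assert (In i Rs) by (apply (Rset_mono g n (path_len p) d); [lia|auto]).
        unfold inR in E. destruct in_dec; [discriminate|contradiction]. }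
    rewrite sum_count in Hf.
    change (ext_le (Some (INR (S d) * INR (length (filter (fun i => negb (inR Rs i)) l))))
      (ext_add (Some (INR (length (outnbrs g n))))
        (fold_right (fun i acc => ext_add (sota_term k g n i) acc) (Some 0) l))).
    set (r := fold_right (fun i acc => ext_add (sota_term k g n i) acc) (Some 0) l) in *.
    pose proof (pos_INR (length (outnbrs g n))).
    destruct r as [v|]; simpl in *; auto. lra.
Qed.

Lemma nat_above (x : R) : exists N : nat, x <= INR N.
Proof.
  destruct (archimed x) as [H1 _].
  destruct (Z_lt_le_dec (up x) 0) as [Hz|Hz].
  - exists 0%nat. simpl. apply IZR_lt in Hz. lra.
  - exists (Z.to_nat (up x)). rewrite INR_IZR_INZ, Z2Nat.id by lia. lra.
Qed.

Lemma ln_le' x y : 0 < x -> x <= y -> ln x <= ln y.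
Proof. intros Hx [H|H]; [left; apply ln_increasing; auto | subst; lra]. Qed.

Lemma exp_mult_nat m x : exp (INR m * x) = exp x ^ m.
Proof.
  induction m; simpl pow.
  - simpl. rewrite Rmult_0_l. apply exp_0.
  - rewrite S_INR, Rmult_plus_distr_r, Rmult_1_l, exp_plus, IHm. ring.
Qed.

Lemma growth (K : R) (D : nat) : 0 < K -> (1 <= D)%nat ->
  exists T, forall t, T <= t -> 4 * (1 + K * t) ^ D <= exp t.
Proof.
  intros HK HD.
  set (mr := INR (2 * D)).
  assert (Hmr : 0 < mr) by (apply lt_0_INR; lia).
  set (A := 1 + K * mr).
  assert (HA : 1 <= A) by (unfold A; nra).
  assert (HAD : 1 <= A ^ D) by (apply pow_R1_Rle; auto).
  exists (mr * (4 * A ^ D)). intros t Ht.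
  assert (Ht0 : 0 <= t) by nra.
  set (y := exp (t / mr)).
  assert (Hy : 1 + t / mr <= y) by apply exp_ineq1_le.
  assert (Htm : mr * (t / mr) = t) by (field; lra).
  assert (Htm0 : 0 <= t / mr) by (unfold Rdiv; apply Rmult_le_pos; [lra| left; apply Rinv_0_lt_compat; lra]).
  assert (Htm1 : 4 * A ^ D <= t / mr).
  { apply (Rmult_le_reg_l mr); auto. rewrite Htm. lra. }
  assert (Hexp : exp t = y ^ D * y ^ D).
  { rewrite <- pow_add. unfold y. rewrite <- exp_mult_nat. f_equal.
    replace (D + D)%nat with (2 * D)%nat by lia. fold mr. rewrite Htm. reflexivity. }
  assert (H1 : 1 + K * t <= A * y).
  { apply Rle_trans with (A * (1 + t / mr)); [|apply Rmult_le_compat_l; lra].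
    unfold A. replace ((1 + K * mr) * (1 + t / mr)) with (1 + t/mr + K*mr + K*(mr*(t/mr))) by ring.
    rewrite Htm. assert (0 <= K * mr) by nra. lra. }
  assert (H2 : (1 + K * t) ^ D <= A ^ D * y ^ D).
  { rewrite <- Rpow_mult_distr. apply pow_incr. split; [nra|auto]. }
  assert (Hy1 : 1 <= y) by lra.
  assert (Hyd : y <= y ^ D).
  { rewrite <- (pow_1 y) at 1. apply Rle_pow; auto. }
  assert (Hyd0 : 0 <= y ^ D) by (apply pow_le; lra).
  rewrite Hexp. nra.
Qed.

Theorem mainTheorem8 (k : nat) (Hk : (2 <= k)%nat) (G : nat -> digraph)
  (Hreach : forall n, all_reachable (G n) n)
  (Hdeg : exists eps, 0 < eps /\ exists C N0, forall n, (N0 <= n)%nat ->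
            INR (maxdeg (G n) n) <= C * Rpower (ln (INR n)) (/2 - eps)) :
  forall M : R, exists N, forall n, (N <= n)%nat ->
    ext_le (Some (M * INR n)) (Gamma_sota k (G n) n).
Proof.
  intros M. destruct Hdeg as [eps [Heps [C [N0 HC]]]].
  destruct (nat_above (2 * M)) as [D0 HD0].
  set (D := S D0).
  set (K := Rabs C + 1).
  assert (HK : 0 < K) by (unfold K; pose proof (Rabs_pos C); lra).
  destruct (growth K D HK ltac:(unfold D; lia)) as [T HT].
  destruct (nat_above (exp T)) as [N1 HN1].
  exists (Nat.max N1 (Nat.max 3 N0)). intros n Hn.
  assert (Hn3 : 3 <= INR n).
  { replace 3 with (INR 3) by (simpl; ring). apply le_INR; lia. }
  assert (Hln1 : 1 <= ln (INR n)).
  { rewrite <- (ln_exp 1). apply ln_le'; [apply exp_pos|]. pose proof exp_le_3. lra. }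
  assert (Hb : INR (maxdeg (G n) n) <= K * ln (INR n)).
  { specialize (HC n ltac:(lia)).
    assert (Hp0 : 0 < Rpower (ln (INR n)) (/ 2 - eps)) by (unfold Rpower; apply exp_pos).
    assert (Hp1 : Rpower (ln (INR n)) (/ 2 - eps) <= ln (INR n)).
    { rewrite <- (Rpower_1 (ln (INR n))) at 2 by lra. apply Rle_Rpower; auto.
      lra. }
    pose proof (Rle_abs C). pose proof (Rabs_pos C). unfold K. nra. }
  assert (HlnT : T <= ln (INR n)).
  { rewrite <- (ln_exp T). apply ln_le'; [apply exp_pos|].
    apply Rle_trans with (INR N1); auto. apply le_INR; lia. }
  assert (Hpow : 4 * (1 + INR (maxdeg (G n) n)) ^ D <= INR n).
  { pose proof (HT _ HlnT) as H. rewrite exp_ln in H by lra.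
    apply Rle_trans with (4 * (1 + K * ln (INR n)) ^ D); auto.
    apply Rmult_le_compat_l; [lra|]. apply pow_incr. pose proof (pos_INR (maxdeg (G n) n)). lra. }
  destruct (comb k (G n) n D Hk ltac:(unfold D; lia)) as [c [A [Hc [HA Hg]]]].
  apply ext_le_trans with (Some (INR (S D) * INR c)); auto. unfold ext_le.
  apply le_INR in Hc. rewrite plus_INR, mult_INR in Hc. simpl (INR 2) in Hc.
  apply le_INR in HA. rewrite pow_INR, plus_INR in HA. simpl (INR 1) in HA.
  assert (HcR : INR n / 2 <= INR c) by lra.
  assert (HSD : 2 * M <= INR (S D)).
  { unfold D. rewrite !S_INR. lra. }
  pose proof (pos_INR n). pose proof (pos_INR (S D)).
  assert (M * INR n <= INR (S D) / 2 * INR n) by (apply Rmult_le_compat_r; lra).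
  assert (INR (S D) * (INR n / 2) <= INR (S D) * INR c) by (apply Rmult_le_compat_l; lra).
  lra.
Qed.
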